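(* Let $k\ge 4$ and let $C$ be a binary Solomon–Stiffler code with parameters $(k,s;u_1,\dots,u_p)$ (as defined in the context). Then the following three statements are equivalent: (1) $u_p\ge 3$ (this condition being vacuous when $p=0$); (2) $C$ is self-orthogonal; (3) $C$ is doubly-even.
   Context: Let $S_k$ be the $k\times(2^k-1)$ binary matrix whose columns are all nonzero vectors of $\mathbb{F}_2^k$, and for an integer $s\ge1$ let $sS_k$ denote $s$ copies of $S_k$ placed side by side. A binary Solomon–Stiffler code with parameters $(k,s;u_1,\dots,u_p)$, where $s\ge1$, $p\ge0$ and $k>u_1>u_2>\cdots>u_p\ge1$ are integers, is defined as follows: choose subspaces $V_1,\dots,V_p$ of $\mathbb{F}_2^k$ with $\dim V_i=u_i$ such that every nonzero vector of $\mathbb{F}_2^k$ lies in at most $s$ of the $V_i$; let $G'$ be the matrix whose columns are the nonzero vectors of $V_1,\dots,V_p$ (with multiplicity), viewed as a submatrix of $sS_k$; let $G$ be obtained from $sS_k$ by deleting the columns of $G'$. The code generated by $G$ is the Solomon–Stiffler code; it is a binary $[s(2^k-1)-\sum_{i=1}^p(2^{u_i}-1),\,k,\,s2^{k-1}-\sum_{i=1}^p2^{u_i-1}]$ code. A binary code is self-orthogonal if $C\subseteq C^\perp$, and doubly-even if all its codeword weights are divisible by $4$. *)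

(* Defs.v *)
From HB Require Import structures.
From mathcomp Require Import all_boot all_order all_algebra.
Set Implicit Arguments. Unset Strict Implicit. Unset Printing Implicit Defensive.
Import GRing.Theory.
Local Open Scope ring_scope.

Notation F2 := 'F_2.

Definition nonzero_vecs (k : nat) (V : {vspace 'rV[F2]_k}) : seq 'rV[F2]_k :=
  [seq v <- enum 'rV[F2]_k | (v != 0) && (v \in V)].

Definition simplex_cols (k : nat) : seq 'rV[F2]_k :=
  [seq v <- enum 'rV[F2]_k | v != 0].
Definition sSk_cols (k s : nat) : seq 'rV[F2]_k := flatten (nseq s (simplex_cols k)).

Definition Gprime_cols (k p : nat) (V : 'I_p -> {vspace 'rV[F2]_k}) : seq 'rV[F2]_k :=
  flatten [seq nonzero_vecs (V i) | i <- enum 'I_p].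

(* Columns of G: those of s S_k with the columns of G' deleted (multiset difference). *)
Definition ss_cols (k s p : nat) (V : 'I_p -> {vspace 'rV[F2]_k}) : seq 'rV[F2]_k :=
  foldr (fun x c => rem x c) (sSk_cols k s) (Gprime_cols V).

Definition ss_len (k s p : nat) (V : 'I_p -> {vspace 'rV[F2]_k}) : nat :=
  size (ss_cols s V).

Definition ss_gen (k s p : nat) (V : 'I_p -> {vspace 'rV[F2]_k}) :
  'M[F2]_(k, ss_len s V) :=
  \matrix_(i < k, j < ss_len s V) (nth 0 (ss_cols s V) j) 0 i.

Definition lin_code (k n : nat) (G : 'M[F2]_(k, n)) : {set 'rV[F2]_n} :=
  [set m *m G | m : 'rV[F2]_k].

Definition ss_code (k s p : nat) (V : 'I_p -> {vspace 'rV[F2]_k}) :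
  {set 'rV[F2]_(ss_len s V)} := lin_code (ss_gen s V).

Definition dotp (n : nat) (x y : 'rV[F2]_n) : F2 := \sum_(j < n) x 0 j * y 0 j.
Definition dual_code (n : nat) (C : {set 'rV[F2]_n}) : {set 'rV[F2]_n} :=
  [set x | [forall c in C, dotp x c == 0]].
Definition self_orthogonal (n : nat) (C : {set 'rV[F2]_n}) : Prop :=
  C \subset dual_code C.
Definition wt (n : nat) (x : 'rV[F2]_n) : nat := #|[set j : 'I_n | x 0 j != 0]|.
Definition doubly_even (n : nat) (C : {set 'rV[F2]_n}) : Prop :=
  forall c, c \in C -> (4 %| wt c)%N.

(* Admissible Solomon--Stiffler parameters (k,s;u_1,...,u_p) with subspaces V_i
   (indices 0..p-1 here stand for 1..p). *)
Definition ss_params (k s p : nat) (u : 'I_p -> nat) (V : 'I_p -> {vspace 'rV[F2]_k})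
  : Prop :=
  [/\ (1 <= s)%N,
      (forall i : 'I_p, (1 <= u i < k)%N),
      (forall i j : 'I_p, (i < j)%N -> (u j < u i)%N),
      (forall i : 'I_p, \dim (V i) = u i) &
      (forall v : 'rV[F2]_k, v != 0 -> (#|[set i : 'I_p | v \in V i]| <= s)%N)].

(* Main.v *)
Require Import Defs.
From HB Require Import structures.
From mathcomp Require Import all_boot all_order all_algebra.
From mathcomp Require Import all_field.
From mathcomp Require Import zify.
From Stdlib Require Import Lia.
Set Implicit Arguments. Unset Strict Implicit. Unset Printing Implicit Defensive.
Import GRing.Theory.
Local Open Scope ring_scope.

Lemma F2_cases (a : 'F_2) : a = 0 \/ a = 1.
Proof. case: a => [[|[|n]] Hn]; [left|right|by []]; exact/val_inj. Qed.
Lemma F2_2 : 2%:R = 0 :> 'F_2. Proof. exact/val_inj. Qed.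
Lemma F2nat n : ((n%:R : 'F_2) == 0) = (2 %| n)%N.
Proof.
rewrite {1}(divn_eq n 2) natrD natrM F2_2 mulr0 add0r.
by rewrite /dvdn modn2; case: odd => //=; rewrite oner_eq0.
Qed.
Lemma F2_11 : 1 + 1 = 0 :> 'F_2. Proof. exact/val_inj. Qed.

Lemma count_enumT (T : finType) (P : pred T) : count P (enum T) = #|P|.
Proof.
rewrite cardE -size_filter; apply: perm_size; apply: uniq_perm.
- exact: filter_uniq (enum_uniq _).
- exact: enum_uniq.
- by move=> x; rewrite mem_filter !mem_enum andbT.
Qed.

Lemma count_nthI (T : Type) (x0 : T) (s : seq T) (P : pred T) :
  #|[set j : 'I_(size s) | P (nth x0 s j)]| = count P s.
Proof. by rewrite -sum1_count (big_nth x0) big_mkord sum1dep_card. Qed.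

Lemma dotpDr n (m v w : 'rV['F_2]_n) : dotp m (v + w) = dotp m v + dotp m w.
Proof. by rewrite /dotp -big_split; apply: eq_bigr => j _; rewrite mxE mulrDr. Qed.
Lemma dotpDl n (m v w : 'rV['F_2]_n) : dotp (m + v) w = dotp m w + dotp v w.
Proof. by rewrite /dotp -big_split; apply: eq_bigr => j _; rewrite mxE mulrDl. Qed.
Lemma dotpNr n (m v : 'rV['F_2]_n) : dotp m (- v) = - dotp m v.
Proof. by rewrite /dotp -sumrN; apply: eq_bigr => j _; rewrite mxE mulrN. Qed.
Lemma dotp0r n (m : 'rV['F_2]_n) : dotp m 0 = 0.
Proof. by rewrite /dotp big1 // => j _; rewrite mxE mulr0. Qed.

Lemma dotp_card n (x y : 'rV['F_2]_n) :
  dotp x y = (#|[set j | (x 0 j != 0) && (y 0 j != 0)]|)%:R.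
Proof.
rewrite -sum1dep_card natr_sum /dotp [RHS]big_mkcond /=; apply: eq_bigr => j _.
by case: (F2_cases (x 0 j)) => ->; case: (F2_cases (y 0 j)) => ->;
  rewrite ?eqxx ?oner_eq0 /= ?mulr0 ?mul0r ?mulr1.
Qed.

Lemma card_sum n (P : pred 'I_n) : #|[set j | P j]| = (\sum_j (P j : nat))%N.
Proof. by rewrite -sum1dep_card big_mkcond; apply: eq_bigr => j _; case: (P j). Qed.

Lemma wt_add n (x y : 'rV['F_2]_n) :
  (wt (x + y) + 2 * #|[set j : 'I_n | (x 0%R j != 0%R) && (y 0%R j != 0%R)]| = wt x + wt y)%N.
Proof.
rewrite /wt !card_sum big_distrr /= -!big_split /=.
apply: eq_bigr => j _; rewrite mxE.
by case: (F2_cases (x 0 j)) => ->; case: (F2_cases (y 0 j)) => ->;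
  rewrite ?eqxx ?oner_eq0 /= ?addr0 ?add0r ?F2_11 ?eqxx ?oner_eq0.
Qed.
Lemma dotp_delta n (a : 'I_n) (v : 'rV['F_2]_n) :
  dotp (\row_j (j == a)%:R) v = v 0 a.
Proof.
rewrite /dotp (bigD1 a) //= big1 ?addr0 => [|j /negbTE ja]; rewrite mxE ?eqxx ?mul1r //.
by rewrite ja mul0r.
Qed.

Lemma F2_neq0 (a : 'F_2) : (a != 0) = (a == 1).
Proof. by case: (F2_cases a) => ->; rewrite ?eqxx ?oner_eq0 // eq_sym oner_eq0. Qed.

Definition Bn k (V : {vspace 'rV['F_2]_k}) (m : 'rV['F_2]_k) :=
  count (fun c => dotp m c != 0) (nonzero_vecs V).

Lemma Bn_card k (V : {vspace 'rV['F_2]_k}) m :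
  Bn V m = #|[set v | (v \in V) && (dotp m v != 0)]|.
Proof.
rewrite /Bn /nonzero_vecs count_filter count_enumT; apply: eq_card => v.
rewrite !inE /=; case: (eqVneq v 0) => [->|] /=; last by rewrite andbC.
by rewrite dotp0r eqxx /= andbF.
Qed.

Lemma Bn_half k (V : {vspace 'rV['F_2]_k}) m :
  Bn V m = 0%N \/ (2 * Bn V m = 2 ^ \dim V)%N.
Proof.
rewrite Bn_card.
case: (pickP [pred v | (v \in V) && (dotp m v != 0)]) => [z /andP[zV zm] | none];
  last by left; apply: eq_card0 => v; rewrite inE; apply: none.
right; have cV := card_vspace V; rewrite card_Fp // in cV.
set A1 := [set v | _].
pose A0 := [set v | (v \in V) && (dotp m v == 0)].
have E : A1 = (fun v => v + z) @: A0.
  apply/setP => w; rewrite /A1 inE; apply/andP/imsetP => [[wV wm]|[v]].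
    exists (w - z); last by rewrite subrK.
    rewrite inE rpredB //= dotpDr dotpNr.
    by move: wm zm; rewrite !F2_neq0 => /eqP-> /eqP->; rewrite subrr.
  by rewrite inE => /andP[vV vm] ->; rewrite rpredD //= dotpDr (eqP vm) add0r.
have HV : #|V| = (#|A0| + #|A1|)%N.
  rewrite -(cardID [pred v | dotp m v != 0] V) addnC; congr (_ + _)%N; apply: eq_card => v;
    by rewrite !inE // negbK andbC.
rewrite -cV HV E card_imset; [by rewrite mul2n addnn | exact: addIr].
Qed.

Lemma count_foldr_rem (T : eqType) (S l : seq T) :
  (forall x, count_mem x l <= count_mem x S)%N ->
  forall P, (count P (foldr (fun x c => rem x c) S l) + count P l = count P S)%N.
Proof.
elim: l => [|x l IH] H P /=; first by rewrite addn0.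
have H' : forall y, (count_mem y l <= count_mem y S)%N.
  move=> y; apply: leq_trans (H y); rewrite /= leq_addl //.
set R := foldr _ S l.
have xR : x \in R.
  rewrite -has_pred1 has_count; have := IH H' (pred1 x); have := H x.
  rewrite /= eqxx /=; rewrite -/R; lia.
have := (permP (perm_to_rem xR)) P; rewrite /= => E.
have := IH H' P; rewrite -/R; lia.
Qed.

Lemma count_nz k (V : {vspace 'rV['F_2]_k}) x :
  count_mem x (nonzero_vecs V) = ((x != 0) && (x \in V)).
Proof.
rewrite count_uniq_mem; last by rewrite filter_uniq ?index_enum_uniq ?enum_uniq.
by rewrite mem_filter mem_enum andbT.
Qed.

Lemma count_Gprime k p (V : 'I_p -> {vspace 'rV['F_2]_k}) P :
  count P (Gprime_cols V) = (\sum_(i < p) count P (nonzero_vecs (V i)))%N.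
Proof. by rewrite /Gprime_cols count_flatten sumnE !big_map. Qed.

Lemma count_sSk k s P : count P (sSk_cols k s) = (s * count P (simplex_cols k))%N.
Proof. by rewrite /sSk_cols count_flatten sumnE big_map big_nseq iter_addn_0 mulnC. Qed.


Lemma simplex_full k : simplex_cols k = nonzero_vecs (fullv : {vspace 'rV['F_2]_k}).
Proof. by apply: eq_filter => v; rewrite memvf andbT. Qed.

Lemma dim_full k : \dim (fullv : {vspace 'rV['F_2]_k}) = k.
Proof. by rewrite dimvf /dim /= mul1n. Qed.

Lemma ss_count k s p (u : 'I_p -> nat) (V : 'I_p -> {vspace 'rV['F_2]_k}) P :
  ss_params s u V ->
  (count P (ss_cols s V) + \sum_(i < p) count P (nonzero_vecs (V i))
   = s * count P (simplex_cols k))%N.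
Proof.
case=> s1 hu hdec hdim hcov.
rewrite /ss_cols -count_Gprime -count_sSk; apply: count_foldr_rem => x.
rewrite count_Gprime count_sSk count_uniq_mem; last by rewrite filter_uniq ?index_enum_uniq ?enum_uniq.
rewrite mem_filter mem_enum andbT.
case: (eqVneq x 0) => [->|x0] /=.
  by rewrite big1 // => i _; rewrite count_nz eqxx.
rewrite muln1 (eq_bigr (fun i => nat_of_bool (x \in V i))); last by move=> i _; rewrite count_nz x0.
apply: leq_trans (hcov x x0); rewrite card_sum; exact: leqnn.
Qed.

Lemma wt_code k s p (V : 'I_p -> {vspace 'rV['F_2]_k}) m :
  wt (m *m ss_gen s V) = count (fun c => dotp m c != 0) (ss_cols s V).
Proof.
rewrite /wt -(count_nthI 0); apply: eq_card => j; rewrite !inE !mxE /dotp.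
by congr (_ != 0); apply: eq_bigr => i _; rewrite mxE.
Qed.

Lemma half_dvd (B d e : nat) : B = 0%N \/ (2 * B = 2 ^ d)%N -> (e < d)%N -> (2 ^ e %| B)%N.
Proof.
case=> [->|H] lt; first exact: dvdn0.
case: d H lt => [|d] H lt //.
have -> : B = (2 ^ d)%N by apply/eqP; rewrite -(eqn_pmul2l (isT : (0 < 2)%N)) H expnS.
by apply: dvdn_exp2l.
Qed.

Lemma Bn_pos k (V : {vspace 'rV['F_2]_k}) m v :
  v \in V -> dotp m v != 0 -> (0 < Bn V m)%N.
Proof. by move=> vV vm; rewrite Bn_card; apply/card_gt0P; exists v; rewrite inE vV. Qed.

Lemma exists_nz n (x : 'rV['F_2]_n) : x != 0 -> exists a, x 0 a != 0.
Proof.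
move=> x0; case: (pickP (fun a => x 0 a != 0)) => [a xa | none]; first by exists a.
case/negP: x0; apply/eqP/rowP => j; rewrite mxE; apply/eqP.
by move: (none j) => /= /negbFE.
Qed.

Lemma three_witness n (x y : 'rV['F_2]_n) : x != 0 -> y != 0 -> x != y ->
  exists m1 m2 : 'rV['F_2]_n,
    [/\ (dotp m1 x != 0) || (dotp m1 y != 0),
        (dotp m2 x != 0) || (dotp m2 y != 0) &
        (dotp (m1 + m2) x != 0) || (dotp (m1 + m2) y != 0)].
Proof.
move=> x0 y0 xy.
have [a xa] := exists_nz x0.
have [b yb] := exists_nz y0.
have [c xyc] : exists c, x 0 c != y 0 c.
  have xy' : x - y != 0 by rewrite subr_eq0.
  have [c] := exists_nz xy'; rewrite !mxE subr_eq0 => h; by exists c.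
case: (F2_cases (y 0 a)) => ya.
  exists (\row_j (j == a)%:R), (\row_j (j == b)%:R).
  by rewrite !dotpDl !dotp_delta ya add0r yb xa; split; rewrite ?orbT.
exists (\row_j (j == a)%:R), (\row_j (j == c)%:R).
rewrite !dotpDl !dotp_delta ya.
move: xa xyc.
case: (F2_cases (x 0 a)) => ->; rewrite ?eqxx // => _.
by case: (F2_cases (x 0 c)) => ->; case: (F2_cases (y 0 c)) => ->;
  rewrite ?eqxx ?F2_11 ?addr0 ?oner_eq0 //.
Qed.

Lemma card_nzV k (V : {vspace 'rV['F_2]_k}) :
  #|[predD1 V & 0]| = (2 ^ \dim V).-1.
Proof.
have cV := card_vspace V; rewrite card_Fp // in cV.
by rewrite -cV (cardD1 0 V) mem0v.
Qed.

Lemma dotp_even n (x y : 'rV['F_2]_n) :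
  (4 %| wt x)%N -> (4 %| wt y)%N -> (4 %| wt (x + y))%N -> dotp x y = 0.
Proof.
move=> a b c; apply/eqP; rewrite dotp_card F2nat.
have := wt_add x y; move: a b c; move: (wt x) (wt y) (wt (x + y)) => A B D.
move: (#|_|) => I; lia.
Qed.

Lemma L_B1 B : B = 0%N \/ (2 * B = 2 ^ 1)%N -> (0 < B)%N -> B = 1%N.
Proof. rewrite expn1; lia. Qed.
Lemma L_B2 B : B = 0%N \/ (2 * B = 2 ^ 2)%N -> (0 < B)%N -> B = 2%N.
Proof. rewrite (_ : 2 ^ 2 = 4)%N //; lia. Qed.
Lemma L_R N S E : (4 %| S)%N -> (4 %| E)%N -> (N + (2 + E) = S)%N -> (N %% 4 = 2)%N.
Proof. lia. Qed.
Lemma L_final N1 N2 N3 I : (N1 %% 4 = 2)%N -> (N2 %% 4 = 2)%N -> (N3 %% 4 = 2)%N ->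
  (N3 + 2 * I = N1 + N2)%N -> (2 %| I)%N -> False.
Proof. lia. Qed.
Lemma L_case1 N S E : (2 %| S)%N -> (2 %| E)%N -> (2 %| N)%N -> (N + (1 + E) = S)%N -> False.
Proof. lia. Qed.

Theorem theorem4p3 (k s p : nat) (u : 'I_p -> nat)
    (V : 'I_p -> {vspace 'rV['F_2]_k}) :
  (4 <= k)%N -> ss_params s u V ->
  ((forall i : 'I_p, val i = p.-1 -> (3 <= u i)%N) <-> self_orthogonal (ss_code s V)) /\
  (self_orthogonal (ss_code s V) <-> doubly_even (ss_code s V)).
Proof.
move=> k4 Hp; have Hp' := Hp; case: Hp' => s1 hu hdec hdim hcov.
set G := ss_gen s V.
have HN : forall m, (wt (m *m G) + \sum_(i < p) Bn (V i) m = s * Bn fullv m)%N.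
  by move=> m; rewrite wt_code /Bn -simplex_full; exact: (ss_count (fun c => dotp m c != 0) Hp).
have memC : forall c, c \in ss_code s V -> exists m, c = m *m G.
  by move=> c /imsetP[m _ ->]; exists m.
have inC : forall m, m *m G \in ss_code s V by move=> m; apply: imset_f.
have Bfull : forall (m : 'rV['F_2]_k) (e : nat), (e < k)%N -> (2 ^ e %| Bn fullv m)%N.
  by move=> m e he; apply: (half_dvd (Bn_half fullv m)); rewrite dim_full.
have BV : forall (i : 'I_p) (m : 'rV['F_2]_k) (e : nat), (e < u i)%N -> (2 ^ e %| Bn (V i) m)%N.
  by move=> i m e he; apply: (half_dvd (Bn_half (V i) m)); rewrite hdim.
have Hlast : forall i : 'I_p, exists i0 : 'I_p,
    val i0 = p.-1 /\ forall j, j != i0 -> (u i0 < u j)%N.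
  move=> i; have p0 : (0 < p)%N by apply: leq_ltn_trans (ltn_ord i).
  have lt : (p.-1 < p)%N by rewrite ltn_predL.
  exists (Ordinal lt); split=> // j hj; apply: hdec => /=.
  have : nat_of_ord j != p.-1 by apply: contra hj => /eqP hj'; apply/eqP/val_inj.
  have := ltn_ord j; lia.
have h1 : (forall i, 3 <= u i)%N -> doubly_even (ss_code s V).
  move=> H3 c /memC[m ->].
  have d1 : (4 %| s * Bn fullv m)%N by apply: dvdn_mull; apply: (Bfull m 2); lia.
  have d2 : (4 %| \sum_(i < p) Bn (V i) m)%N.
    by apply: dvdn_sum => i _; apply: (BV i m 2); apply: H3.
  have := HN m; lia.
have h2 : doubly_even (ss_code s V) -> self_orthogonal (ss_code s V).
  move=> DE; apply/subsetP => x xC; rewrite inE; apply/forall_inP => c cC.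
  have [m1 ->] := memC x xC; have [m2 ->] := memC c cC.
  apply/eqP; apply: dotp_even; [exact: (DE _ (inC m1)) | exact: (DE _ (inC m2)) | rewrite -mulmxDl; exact: (DE _ (inC (m1 + m2)))].
have SOf : self_orthogonal (ss_code s V) ->
    forall m1 m2 : 'rV['F_2]_k, dotp (m1 *m G) (m2 *m G) = 0.
  move=> SO m1 m2; have := subsetP SO _ (inC m1); rewrite inE.
  by move=> /forall_inP /(_ _ (inC m2)) /eqP.
have h3 : self_orthogonal (ss_code s V) -> forall i, (3 <= u i)%N.
  move=> SO.
  have Hev : forall m, (2 %| wt (m *m G))%N.
    move=> m; have := SOf SO m m; rewrite dotp_card => /eqP; rewrite F2nat.
    suff -> : #|[set j | ((m *m G) 0 j != 0) && ((m *m G) 0 j != 0)]| = wt (m *m G) by [].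
    by apply: eq_card => j; rewrite !inE andbb.
  have Hadd : forall m1 m2, exists I,
      (wt ((m1 + m2) *m G) + 2 * I = wt (m1 *m G) + wt (m2 *m G))%N /\ (2 %| I)%N.
    move=> m1 m2; eexists; split; first by rewrite mulmxDl; exact: wt_add.
    by rewrite -F2nat -dotp_card SOf.
  move=> i; rewrite leqNgt; apply/negP => hi.
  have [i0 [vi0 hlast]] := Hlast i.
  have ui0 : (u i0 < 3)%N.
    case: (eqVneq i i0) => [<- //|ne]; have := hlast i ne; lia.
  have hu0 := hu i0.
  have Hsplit : forall m, (\sum_(j < p) Bn (V j) m = Bn (V i0) m + \sum_(j < p | j != i0) Bn (V j) m)%N.
    by move=> m; rewrite (bigD1 i0).
  have Hh0 : forall m, Bn (V i0) m = 0%N \/ (2 * Bn (V i0) m = 2 ^ u i0)%N.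
    by move=> m; rewrite -hdim; exact: Bn_half.
  have [u1|u2] : u i0 = 1%N \/ u i0 = 2%N by lia.
  - have : (0 < #|[predD1 V i0 & 0%R]|)%N by rewrite card_nzV hdim u1.
    case/card_gt0P => v; rewrite !inE => /andP[v0 vV].
    have [a va] := exists_nz v0.
    pose m := \row_j (j == a)%:R : 'rV['F_2]_k.
    have Bp : (0 < Bn (V i0) m)%N by apply: (Bn_pos vV); rewrite dotp_delta.
    have B1 : Bn (V i0) m = 1%N by have := Hh0 m; rewrite u1 => H; exact: L_B1 H Bp.
    have d1 : (2 %| s * Bn fullv m)%N by apply: dvdn_mull; apply: (Bfull m 1); exact: ltnW (ltnW k4).
    have d2 : (2 %| \sum_(j < p | j != i0) Bn (V j) m)%N.
      by apply: dvdn_sum => j hj; apply: (BV j m 1); have := hlast j hj; rewrite u1.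
    by have := HN m; rewrite Hsplit B1 => H; exact: L_case1 d1 d2 (Hev m) H.
  - have : (0 < #|[predD1 V i0 & 0%R]|)%N by rewrite card_nzV hdim u2.
    case/card_gt0P => x; rewrite !inE => /andP[x0 xV].
    have : (0 < #|[predD1 [predD1 V i0 & 0%R] & x]|)%N.
      have xin : x \in [predD1 V i0 & 0%R] by rewrite !inE x0 xV.
      have := cardD1 x [predD1 V i0 & 0%R]; rewrite card_nzV hdim u2 xin; rewrite ?expnS ?expn0 => H; rewrite lt0n; apply/eqP => E; move: H; by rewrite E => /eqP.
    move=> /card_gt0P [y]; rewrite !inE => /and3P[yx y0 yV].
    have xy : x != y by rewrite eq_sym.
    have [m1 [m2 [w1 w2 w3]]] := three_witness x0 y0 xy.
    have B2 : forall m, (dotp m x != 0) || (dotp m y != 0) -> Bn (V i0) m = 2%N.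
      move=> m hm; have Bp : (0 < Bn (V i0) m)%N.
        by case/orP: hm => hm; [apply: (Bn_pos xV hm) | apply: (Bn_pos yV hm)].
      by have := Hh0 m; rewrite u2 => H; exact: L_B2 H Bp.
    have R : forall m, (dotp m x != 0) || (dotp m y != 0) ->
        (wt (m *m G) %% 4 = 2)%N.
      move=> m hm.
      have d1 : (4 %| s * Bn fullv m)%N by apply: dvdn_mull; apply: (Bfull m 2); exact: ltnW k4.
      have d2 : (4 %| \sum_(j < p | j != i0) Bn (V j) m)%N.
        by apply: dvdn_sum => j hj; apply: (BV j m 2); have := hlast j hj; rewrite u2.
      by have := HN m; rewrite Hsplit (B2 m hm) => H; exact: L_R d1 d2 H.
    have [I [HI dI]] := Hadd m1 m2.
    exact: (L_final (R _ w1) (R _ w2) (R _ w3) HI dI).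
split; first split.
- move=> H; apply: h2; apply: h1 => i.
  have [i0 [vi0 hlast]] := Hlast i.
  case: (eqVneq i i0) => [-> |ne]; first exact: H.
  have := hlast i ne; have := H i0 vi0; lia.
- by move=> SO i _; apply: h3.
split; first by move=> SO; apply: h1; apply: h3.
exact: h2.
Qed.
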